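(* Let $(Q,\rightarrow)$ be a finite transition system. Let $\mathscr{U}$ be a preorder on $Q$ and $\mathscr{R}\subseteq\mathscr{U}$ a preorder with $\mathscr{R}\circ\rightarrow^{-1}\subseteq\rightarrow^{-1}\circ\mathscr{U}$. Let $\mathscr{P}$ be the coarsest equivalence relation with $\mathscr{P}\subseteq\mathscr{R}$ and $\mathscr{P}\circ\rightarrow^{-1}\subseteq\rightarrow^{-1}\circ\mathscr{R}$. Let $\mathit{NotRel}=\mathscr{U}\setminus\mathscr{R}$ and $\mathscr{V}=\mathscr{R}\setminus\mathit{NotRel}'$ where $$\mathit{NotRel}'=\bigcup\{[c]_{\mathscr{P}}\times[d]_{\mathscr{P}} \mid b,c,d\in Q,\ c\rightarrow b,\ c\,\mathscr{R}\,d,\ d\in\rightarrow^{-1}(\mathit{NotRel}(b)),\ d\notin\rightarrow^{-1}(\mathscr{R}(b))\}.$$ Then: 1. $\mathit{NotRel}'=X$ where $X=\{(c,d)\mid \exists b\in Q:\ c\rightarrow_{\mathscr{R}}b,\ c\,\mathscr{R}\,d,\ d\in\rightarrow_{\mathscr{R}}^{-1}(\mathit{NotRel}(b)),\ d\notin\rightarrow_{\mathscr{R}}^{-1}(\mathscr{R}(b))\}$; 2. every simulation $\mathscr{S}\subseteq\mathscr{R}$ satisfies $\mathscr{S}\subseteq\mathscr{V}$; 3. $\mathscr{V}\circ\rightarrow^{-1}\subseteq\rightarrow^{-1}\circ\mathscr{R}$; 4. $\mathscr{V}$ is a preorder; 5. $\mathscr{V}$ is $\mathscr{R}$-stable, i.e.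 $\mathscr{V}\subseteq\mathscr{R}$ is a preorder with $\mathscr{V}\circ\rightarrow^{-1}\subseteq\rightarrow^{-1}\circ\mathscr{R}$; 6. the blocks of $\mathscr{V}$ are exactly the blocks of $\mathscr{P}$ (i.e. $\{[q]_{\mathscr{V}}\mid q\in Q\}=\{[q]_{\mathscr{P}}\mid q\in Q\}$).
   Context: For relations on $Q$: $\mathscr{R}(q)=\{q'\mid q\,\mathscr{R}\,q'\}$, $\mathscr{R}(Y)=\bigcup_{q\in Y}\mathscr{R}(q)$, $\mathscr{R}^{-1}=\{(y,x)\mid(x,y)\in\mathscr{R}\}$, $\mathscr{S}\circ\mathscr{R}=\{(x,y)\mid y\in\mathscr{S}(\mathscr{R}(x))\}$. A preorder is a reflexive transitive relation; $[q]_{\mathscr{R}}=\{q'\mid q\,\mathscr{R}\,q'\wedge q'\,\mathscr{R}\,q\}$. A relation $\mathscr{S}$ is a simulation if $\mathscr{S}\circ\rightarrow^{-1}\subseteq\rightarrow^{-1}\circ\mathscr{S}$ (equivalently: $q_1\,\mathscr{S}\,q_2$ and $q_1\rightarrow q_1'$ imply some $q_2'$ with $q_2\rightarrow q_2'$ and $q_1'\,\mathscr{S}\,q_2'$). A transition $q\rightarrow q'$ is $\mathscr{R}$-maximal, written $q\rightarrow_{\mathscr{R}}q'$, if for all $q''$, ($q\rightarrow q''$ and $q'\,\mathscr{R}\,q''$) implies $q''\in[q']_{\mathscr{R}}$. The coarsest equivalence relation $\mathscr{P}$ in the hypothesis exists (it contains all other equivalence relations with the same two properties). *)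

(* Defs.v *)
From mathcomp Require Import all_boot.
Set Implicit Arguments. Unset Strict Implicit. Unset Printing Implicit Defensive.

Definition hrel (Q : Type) := Q -> Q -> Prop.

Section Rels.
Variable Q : Type.
Implicit Types (R S : hrel Q) (Y : Q -> Prop).

Definition img1 R (q : Q) : Q -> Prop := fun q' => R q q'.
Definition img R Y : Q -> Prop := fun q' => exists q, Y q /\ R q q'.
Definition rinv R : hrel Q := fun y x => R x y.
(* S o R = {(x,y) | y in S(R(x))} *)
Definition rcomp S R : hrel Q := fun x y => exists z, R x z /\ S z y.
Definition rincl R S := forall x y, R x y -> S x y.
Definition rdiff R S : hrel Q := fun x y => R x y /\ ~ S x y.
Definition is_preorder R := (forall x, R x x) /\ (forall x y z, R x y -> R y z -> R x z).
Definition is_equiv R :=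
  (forall x, R x x) /\ (forall x y, R x y -> R y x) /\ (forall x y z, R x y -> R y z -> R x z).
Definition blk R (q : Q) : Q -> Prop := fun q' => R q q' /\ R q' q.

Variable trans : hrel Q.

Definition simulation S := rincl (rcomp S (rinv trans)) (rcomp (rinv trans) S).
Definition maxtrans R : hrel Q := fun q q' =>
  trans q q' /\ forall q'', trans q q'' -> R q' q'' -> blk R q' q''.
Definition Rstable R V :=
  rincl V R /\ is_preorder V /\ rincl (rcomp V (rinv trans)) (rcomp (rinv trans) R).

Definition NotRel U R : hrel Q := rdiff U R.

Definition NotRel' U R P : hrel Q := fun c' d' =>
  exists b c d, trans c b /\ R c d /\
    img (rinv trans) (img1 (NotRel U R) b) d /\
    ~ img (rinv trans) (img1 R b) d /\
    blk P c c' /\ blk P d d'.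

Definition Vrel U R P : hrel Q := rdiff R (NotRel' U R P).

Definition Xrel U R : hrel Q := fun c d =>
  exists b, maxtrans R c b /\ R c d /\
    img (rinv (maxtrans R)) (img1 (NotRel U R) b) d /\
    ~ img (rinv (maxtrans R)) (img1 R b) d.
End Rels.

(* Main.v *)
Require Import Defs.
From mathcomp Require Import all_boot.
From mathcomp Require Import zify.
From Stdlib Require Import Classical ClassicalEpsilon.

Definition pb (A : Prop) : bool := if excluded_middle_informative A then true else false.
Lemma pbP (A : Prop) : pb A = true <-> A.
Proof. by rewrite /pb; case: excluded_middle_informative. Qed.

Lemma exmax (Q : finType) (R : hrel Q) (hR : is_preorder R) (S : Q -> Prop) m :
  S m -> exists m', S m' /\ R m m' /\ forall s, S s -> R m' s -> R s m'.
Proof.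
case: hR => Rref Rtr.
pose cnt m := #|[pred x | pb (R x m)]|.
suff: forall n m, #|Q| - cnt m < n -> S m ->
  exists m', S m' /\ R m m' /\ forall s, S s -> R m' s -> R s m'.
  by move=> H Sm; apply: (H (#|Q| - cnt m).+1).
elim=> [//|n IH] {}m hn Sm.
case: (classic (exists s, S s /\ R m s /\ ~ R s m)) => [[s [Ss [Rms nRsm]]]|hno].
  have lt : cnt m < cnt s.
    apply: proper_card; apply/properP; split.
      apply/subsetP => x; rewrite !inE => /pbP Rxm; apply/pbP; exact: Rtr Rxm Rms.
    exists s; rewrite !inE; first by apply/pbP.
    by apply/negP => /pbP.
  have le : cnt s <= #|Q| by apply: max_card.
  have [m' [Sm' [Rsm' H]]] := IH s ltac:(lia) Ss.
  exists m'; split=>//; split=>//; exact: Rtr Rms Rsm'.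
exists m; split=>//; split; first exact: Rref.
move=> s Ss Rms; apply: NNPP => nRsm; apply: hno; by exists s.
Qed.

Theorem theorem1 (Q : finType) (trans U R P : hrel Q)
  (hU : is_preorder U) (hR : is_preorder R) (hRU : rincl R U)
  (hRsim : rincl (rcomp R (rinv trans)) (rcomp (rinv trans) U))
  (hPeq : is_equiv P) (hPR : rincl P R)
  (hPsim : rincl (rcomp P (rinv trans)) (rcomp (rinv trans) R))
  (hPmax : forall E : hrel Q, is_equiv E -> rincl E R ->
             rincl (rcomp E (rinv trans)) (rcomp (rinv trans) R) -> rincl E P) :
  (forall c d, NotRel' trans U R P c d <-> Xrel trans U R c d)
  /\ (forall S : hrel Q, simulation trans S -> rincl S R -> rincl S (Vrel trans U R P))
  /\ rincl (rcomp (Vrel trans U R P) (rinv trans)) (rcomp (rinv trans) R)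
  /\ is_preorder (Vrel trans U R P)
  /\ Rstable trans R (Vrel trans U R P)
  /\ (forall q, exists q', forall x, blk (Vrel trans U R P) q x <-> blk P q' x)
  /\ (forall q, exists q', forall x, blk P q x <-> blk (Vrel trans U R P) q' x).
Proof.
have [Rref Rtr] := hR. have [Pref [Psym Ptr]] := hPeq. have [Uref Utr] := hU.
have simP : forall z x y, trans z x -> P z y -> exists w, R x w /\ trans y w.
  by move=> z x y h1 h2; case: (hPsim x y (ex_intro _ z (conj h1 h2))) => w [? ?]; exists w.
have simR : forall z x y, trans z x -> R z y -> exists w, U x w /\ trans y w.
  by move=> z x y h1 h2; case: (hRsim x y (ex_intro _ z (conj h1 h2))) => w [? ?]; exists w.
have mx : forall d q, trans d q -> exists q', maxtrans trans R d q' /\ R q q'.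
  move=> d q hdq.
  have [m' [[Sm' Rqm'] [Rqm2 Hmax]]] :=
    @exmax _ _ hR (fun s => trans d s /\ R q s) q (conj hdq (Rref q)).
  exists m'; split=>//; split=>// q'' h1 h2; split=>//; apply: Hmax=>//; split=>//.
  exact: Rtr Rqm2 h2.
have key : forall c' d', NotRel' trans U R P c' d' ->
   exists b', maxtrans trans R c' b' /\ R c' d' /\
     (exists q, NotRel U R b' q /\ maxtrans trans R d' q) /\
     (forall q, trans d' q -> ~ R b' q).
  move=> c' d' [b [c [d [hcb [hcd [_ [hno [[Pcc' Pc'c] [Pdd' Pd'd]]]]]]]]].
  have [b1 [Rbb1 hc'b1]] := simP _ _ _ hcb Pcc'.
  have [b' [hmb' Rb1b']] := mx _ _ hc'b1.
  have Rbb' := Rtr _ _ _ Rbb1 Rb1b'.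
  have Rc'd' : R c' d' := Rtr _ _ _ (Rtr _ _ _ (hPR _ _ Pc'c) hcd) (hPR _ _ Pdd').
  have nod : forall q, trans d' q -> ~ R b' q.
    move=> q hq Rb'q. have [q3 [Rqq3 hdq3]] := simP _ _ _ hq Pd'd.
    apply: hno; exists q3; split; last exact hdq3.
    exact: Rtr Rbb' (Rtr _ _ _ Rb'q Rqq3).
  exists b'; split=>//; split=>//; split=>//.
  have [w [Ub'w hd'w]] := simR _ _ _ (hmb'.1) Rc'd'.
  have [q' [hmq' Rwq']] := mx _ _ hd'w.
  exists q'; split=>//; split; first exact: Utr Ub'w (hRU _ _ Rwq').
  exact: nod _ hmq'.1.
have V3 : forall z x y, trans z x -> Vrel trans U R P z y -> exists w, R x w /\ trans y w.
  move=> z x y hzx [Rzy nN]; apply: NNPP => hne; apply: nN.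
  exists x, z, y; split=>//; split=>//; split.
    have [w [Uxw hyw]] := simR _ _ _ hzx Rzy.
    exists w; split; last exact hyw; split=>// Rxw; apply: hne; by exists w.
  split; first by move=> [w [Rxw hyw]]; apply: hne; exists w.
  by split; split; apply: Pref.
have noN : forall x y, (forall b, trans x b -> exists w, R b w /\ trans y w) ->
    ~ NotRel' trans U R P x y.
  move=> x y hs /key [b' [hm [_ [_ nod]]]].
  have [w [Rb'w hyw]] := hs _ hm.1. exact: nod _ hyw Rb'w.
have C3 : rincl (rcomp (Vrel trans U R P) (rinv trans)) (rcomp (rinv trans) R).
  move=> x y [z [hzx Vzy]]. have [w [? ?]] := V3 _ _ _ hzx Vzy. by exists w.
have Vref : forall x, Vrel trans U R P x x.
  move=> x; split; first exact: Rref. apply: noN => b hb; exists b; split=>//.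
have Vtr : forall x y z, Vrel trans U R P x y -> Vrel trans U R P y z -> Vrel trans U R P x z.
  move=> x y z Vxy Vyz; split; first exact: Rtr Vxy.1 Vyz.1.
  apply: noN => b hxb.
  have [w1 [Rbw1 hyw1]] := V3 _ _ _ hxb Vxy.
  have [w2 [Rw1w2 hzw2]] := V3 _ _ _ hyw1 Vyz.
  exists w2; split=>//; exact: Rtr Rbw1 Rw1w2.
have PV : forall x y, P x y -> Vrel trans U R P x y.
  move=> x y Pxy; split; first exact: hPR. apply: noN => b hxb. exact: simP _ _ _ hxb Pxy.
have VP : forall x y, Vrel trans U R P x y -> Vrel trans U R P y x -> P x y.
  move=> x y h1 h2.
  apply: (hPmax (fun a b => Vrel trans U R P a b /\ Vrel trans U R P b a)) => //.
  - split; first by move=> a; split; apply: Vref.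
    split; first by move=> a b [? ?]; split.
    move=> a b c [? ?] [? ?]; split; eapply Vtr; eauto.
  - by move=> a b [h _]; exact h.1.
  - by move=> a b [z [hza [Vzb _]]]; apply: C3; exists z; split.
split.
  move=> c d; split.
  - move=> H. have [b' [hm [Rcd [[q [nr hq]] nod]]]] := key _ _ H.
    exists b'; split=>//; split=>//; split; first by exists q; split.
    move=> [q' [Rb'q' hq']]. exact: nod _ hq'.1 Rb'q'.
  - move=> [b [hm [Rcd [[q [nr hq]] nomax]]]].
    exists b, c, d; split; first exact hm.1.
    split=>//; split; first by exists q; split=>//; exact hq.1.
    split.
      move=> [q' [Rbq' hdq']]. have [q'' [hm'' Rq'q'']] := mx _ _ hdq'.
      apply: nomax; exists q''; split=>//. exact: Rtr Rbq' Rq'q''.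
    by split; split; apply: Pref.
split.
  move=> S hS hSR x y Sxy; split; first exact: hSR _ _ Sxy.
  apply: noN => b hxb.
  have [w [Sbw hyw]] := hS b y (ex_intro _ x (conj hxb Sxy)).
  exists w; split=>//; exact: hSR.
split; first exact: C3.
have Vpre : is_preorder (Vrel trans U R P) by split; [exact Vref | exact Vtr].
split; first exact: Vpre.
split; first by split; [move=> x y h; exact h.1 | split].
split.
  move=> q; exists q => x; split.
    by move=> [h1 h2]; split; apply: VP.
  by move=> [h1 h2]; split; apply: PV.
move=> q; exists q => x; split.
  by move=> [h1 h2]; split; apply: PV.
by move=> [h1 h2]; split; apply: VP.
Qed.
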